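(* Let $S,T\in\mathbb P$ with $\deg(S)=n$, $\deg(T)=m$, and let $0\le k\le n-m$. Then $$\sum_{U\in\mathbb P,\ \deg(U)=m+k}(S/U)(U/T)=(S/T)\binom{n-m}{k}.$$ Consequently, for all $a,b\in\mathbb C$, $$\sum_{U\in\mathbb P}(S/U)(U/T)\,a^{\,n-\deg(U)}(b-a)^{\deg(U)-m}=(S/T)\,b^{\,n-m}.$$
   Context: Let $\mathbb P$ denote the set of finite planar reduced rooted trees (rooted trees in which the children of each vertex are linearly ordered and no vertex has exactly one child), including the empty tree $\mathbf 1$ and the one-vertex tree $|$. For $T\in\mathbb P$, $\deg(T)$ is the number of leaves and $L(T)$ its set of leaves. For $S\in\mathbb P$ and $I\subseteq L(S)$, the contraction $S|I\in\mathbb P$ is obtained from the subtree of $S$ consisting of all vertices on paths from the root to leaves in $I$ (with induced planar order) by suppressing every vertex having exactly one child ($S|\emptyset=\mathbf 1$, $S|I=|$ if $\#I=1$). The planar binomial coefficient is $(S/T)=\#\{I\subseteq L(S):S|I=T\}$ (zero unless $\deg T\le\deg S$). *)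

(* Defs.v *)
From HB Require Import structures.
From mathcomp Require Import all_boot all_order all_algebra.
From mathcomp Require Import boolp classical_sets fsbigop.
Set Implicit Arguments. Unset Strict Implicit. Unset Printing Implicit Defensive.

(* Nonempty finite planar rooted trees: a vertex with its ordered list of children.
   A leaf is [Node [::]]; the one-vertex tree | is [Node [::]]. *)
Inductive ptree := Node of seq ptree.

Definition leaf := Node [::].

Fixpoint encode (t : ptree) : GenTree.tree unit :=
  let: Node s := t in GenTree.Node 0 (map encode s).
Fixpoint decode (t : GenTree.tree unit) : ptree :=
  match t with
  | GenTree.Leaf _ => Node [::]
  | GenTree.Node _ s => Node (map decode s)
  end.
Fixpoint encodeK (t : ptree) : decode (encode t) = t :=
  match t return decode (encode t) = t with
  | Node s => f_equal Node
      ((fix aux (s : seq ptree) : map decode (map encode s) = s :=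
          match s return map decode (map encode s) = s with
          | [::] => erefl
          | c :: s' => f_equal2 cons (encodeK c) (aux s')
          end) s)
  end.
HB.instance Definition _ := Countable.copy ptree (can_type encodeK).

Fixpoint deg (t : ptree) : nat :=
  match t with
  | Node [::] => 1
  | Node s => (fix sumd (s : seq ptree) := match s with
                 | [::] => 0 | c :: s' => deg c + sumd s' end) s
  end.

Fixpoint reduced (t : ptree) : bool :=
  let: Node s := t in (size s != 1) && all reduced s.

(* Contraction of t to the set of leaves whose planar (left-to-right, i.e. DFS)
   index i satisfies p i; [None] is the empty tree. *)
Fixpoint contr (p : nat -> bool) (t : ptree) : option ptree :=
  match t with
  | Node [::] => if p 0 then Some leaf else None
  | Node s =>
    let kids := (fix go (s : seq ptree) (off : nat) := match s with
                   | [::] => [::]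
                   | c :: s' => contr (fun i => p (off + i)) c :: go s' (off + deg c)
                   end) s 0 in
    match pmap id kids with
    | [::] => None
    | [:: k] => Some k
    | ks => Some (Node ks)
    end
  end.

(* The set P: [None] is the empty tree 1, [Some t] a nonempty tree. *)
Definition PT := option ptree.
Definition inP (U : PT) : bool := if U is Some t then reduced t else true.
Definition degP (U : PT) : nat := if U is Some t then deg t else 0.

Definition contrP (S : PT) (I : {set 'I_(degP S)}) : PT :=
  match S return {set 'I_(degP S)} -> PT with
  | None => fun _ => None
  | Some t => fun I => contr (fun i => [exists j in I, nat_of_ord j == i]) t
  end I.

Definition pbinom (S T : PT) : nat :=
  #|[set I : {set 'I_(degP S)} | contrP I == T]|.

(* Main.v *)
Require Import Defs.
From HB Require Import structures.
From mathcomp Require Import all_boot all_order all_algebra.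
From mathcomp Require Import boolp classical_sets fsbigop.
Import GRing.Theory Num.Theory.
Local Open Scope classical_set_scope.
Local Open Scope ring_scope.

Local Close Scope ring_scope.
Local Close Scope classical_set_scope.
Set Implicit Arguments. Unset Strict Implicit. Unset Printing Implicit Defensive.

Definition allT (P : ptree -> Prop) (s : seq ptree) := foldr (fun c A => P c /\ A) True s.

Fixpoint ptree_ind2 (P : ptree -> Prop)
  (H : forall s, allT P s -> P (Node s)) (t : ptree) : P t :=
  match t with
  | Node s => H s ((fix aux (s : seq ptree) : allT P s :=
       match s with [::] => I | c :: s' => conj (ptree_ind2 H c) (aux s') end) s)
  end.

Definition sdeg (s : seq ptree) := sumn (map deg s).

Lemma deg_node s : s != [::] -> deg (Node s) = sdeg s.
Proof.
case: s => // c s _ /=; congr (_ + _); rewrite /sdeg.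
by elim: s => //= c' s ->.
Qed.

Definition mk (ks : seq ptree) : option ptree :=
  match ks with [::] => None | [:: k] => Some k | k :: k2 :: l => Some (Node [:: k, k2 & l]) end.

Definition olist (o : option ptree) := if o is Some x then [:: x] else [::].

Fixpoint cf (p : nat -> bool) (s : seq ptree) : seq ptree :=
  match s with [::] => [::]
  | c :: s' => olist (contr p c) ++ cf (fun i => p (deg c + i)) s' end.

Definition cgo (p : nat -> bool) :=
  fix go (s : seq ptree) (off : nat) := match s with
                   | [::] => [::]
                   | c :: s' => contr (fun i => p (off + i)) c :: go s' (off + deg c)
                   end.

Lemma contr_node_go p s : s != [::] -> contr p (Node s) = mk (pmap id (cgo p s 0)).
Proof. by case: s. Qed.

Lemma cgo_cf p s off : pmap id (cgo p s off) = cf (fun i => p (off + i)) s.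
Proof.
elim: s p off => //= c s IH p off; rewrite IH.
have -> : (fun i => p (off + deg c + i)) = (fun i => p (off + (deg c + i))).
  by apply: funext => i; rewrite addnA.
by case: (contr _ c).
Qed.

Lemma contr_node p s : s != [::] -> contr p (Node s) = mk (cf p s).
Proof. by move=> /(contr_node_go p) ->; rewrite cgo_cf. Qed.

Lemma contr_leaf p : contr p leaf = if p 0 then Some leaf else None.
Proof. by []. Qed.

Definition contrO (q : nat -> bool) (o : option ptree) :=
  if o is Some u then contr q u else None.

Lemma cf_cat p s1 s2 : cf p (s1 ++ s2) = cf p s1 ++ cf (fun i => p (sdeg s1 + i)) s2.
Proof.
elim: s1 p => //= c s1 IH p; rewrite IH catA; congr (_ ++ cf _ _).
by apply: funext => i; rewrite /sdeg /= addnA.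
Qed.

Lemma cf_olist q x : cf q (olist x) = olist (contrO q x).
Proof. by case: x => //= u; rewrite cats0. Qed.

Lemma sdeg_cat s1 s2 : sdeg (s1 ++ s2) = sdeg s1 + sdeg s2.
Proof. by rewrite /sdeg map_cat sumn_cat. Qed.

Lemma sdeg_olist x : sdeg (olist x) = degP x.
Proof. by case: x => //= u; rewrite /sdeg /= addn0. Qed.

Lemma degP_mk ks : degP (mk ks) = sdeg ks.
Proof.
case: ks => [|x [|y r]] //; first by rewrite /sdeg /= addn0.
exact: (@deg_node [:: x, y & r]).
Qed.

Lemma count_iota_shift (p : nat -> bool) d k :
  count p (iota d k) = count (fun i => p (d + i)) (iota 0 k).
Proof. by rewrite -{1}(addn0 d) iotaDl count_map. Qed.

Lemma count_iotaD (p : nat -> bool) a b :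
  count p (iota 0 (a + b)) = count p (iota 0 a) + count (fun i => p (a + i)) (iota 0 b).
Proof. rewrite iotaD count_cat [count _ (iota (0 + a) b)]count_iota_shift. by []. Qed.

Lemma degP_contr : forall t p, degP (contr p t) = count p (iota 0 (deg t)).
Proof.
elim/ptree_ind2 => s IHs p.
case: (eqVneq s [::]) => [->|sn0].
  by rewrite contr_leaf /=; case: (p 0).
rewrite contr_node // degP_mk deg_node //.
elim: s IHs p {sn0} => [|c s IH] //= [IHc IHs] p /=.
rewrite sdeg_cat sdeg_olist IHc IH // /sdeg /= count_iotaD.
by [].
Qed.

Definition rp (p q : nat -> bool) := fun i => p i && q (count p (iota 0 i)).

Lemma contrO_mk q ks : contrO q (mk ks) = mk (cf q ks).
Proof.
case: ks => [|x [|y r]] //.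
  by rewrite /= cats0; case: (contr q x).
exact: (@contr_node q [:: x, y & r]).
Qed.

Lemma contr_comp : forall t p q, contrO q (contr p t) = contr (rp p q) t.
Proof.
elim/ptree_ind2 => s IHs p q.
case: (eqVneq s [::]) => [->|sn0].
  rewrite !contr_leaf /rp /=; by case: (p 0).
rewrite !contr_node // contrO_mk; congr mk.
elim: s IHs p q {sn0} => [|c s IH] //= [IHc IHs] p q /=.
rewrite cf_cat cf_olist IHc sdeg_olist IH //; congr (_ ++ cf _ _).
apply: funext => i; rewrite /rp count_iotaD degP_contr.
by [].
Qed.

Lemma reduced_mk ks : all reduced ks -> inP (mk ks).
Proof. by case: ks => [|x [|y r]] //= /andP[]. Qed.

Lemma inP_contr : forall t p, inP (contr p t).
Proof.
elim/ptree_ind2 => s IHs p.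
case: (eqVneq s [::]) => [->|sn0].
  by rewrite contr_leaf; case: (p 0).
rewrite contr_node //; apply: reduced_mk.
elim: s IHs p {sn0} => [|c s IH] //= [IHc IHs] p /=.
rewrite all_cat IH // andbT.
by have := IHc p; case: (contr p c) => //= u ->.
Qed.

Definition pI n (I : {set 'I_n}) : nat -> bool :=
  fun i => [exists j in I, nat_of_ord j == i].

Lemma contrP_E U (J : {set 'I_(degP U)}) : contrP J = contrO (pI J) U.
Proof. by case: U J. Qed.

Lemma pI_ord n (I : {set 'I_n}) (j : 'I_n) : pI I j = (j \in I).
Proof.
apply/existsP/idP => [[j' /andP[j'I /eqP /val_inj <-]] //|jI].
by exists j; rewrite jI eqxx.
Qed.

Lemma pI_ge n (I : {set 'I_n}) i : n <= i -> pI I i = false.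
Proof.
move=> ni; apply/existsP => -[j /andP[_ /eqP ji]].
by move: (ltn_ord j); rewrite ji ltnNge ni.
Qed.

Lemma count_pI n (I : {set 'I_n}) : count (pI I) (iota 0 n) = #|I|.
Proof.
rewrite -val_enum_ord count_map cardE /enum_mem size_filter count_filter.
by apply: eq_count => j /=; rewrite pI_ord andbT.
Qed.

Lemma degP_contrP S (I : {set 'I_(degP S)}) : degP (contrP I) = #|I|.
Proof.
case: S I => [t|] I /=; first by rewrite degP_contr count_pI.
by apply/esym/eqP; rewrite cards_eq0; apply/eqP/setP => -[].
Qed.

Lemma inP_contrP S (I : {set 'I_(degP S)}) : inP (contrP I).
Proof. by case: S I => [t|] I //=; apply: inP_contr. Qed.

Definition rank n (I : {set 'I_n}) (i : nat) := count (pI I) (iota 0 i).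

Definition compset n (I : {set 'I_n}) d (J : {set 'I_d}) : {set 'I_n} :=
  [set i | (i \in I) && pI J (rank I i)].

Lemma contrP_comp S (I : {set 'I_(degP S)}) (J : {set 'I_(degP (contrP I))}) :
  contrP J = contrP (compset I J).
Proof.
rewrite (contrP_E J) (contrP_E (compset I J)).
case: S I J => [t|] I J //.
change (contrO (pI J) (contr (pI I) t) = contr (pI (compset I J)) t).
rewrite contr_comp; congr contr; apply: funext => i.
rewrite /rp; case: (ltnP i (deg t)) => [lt|ge].
  by rewrite -[i]/(nat_of_ord (Ordinal lt)) !pI_ord inE.
by rewrite (pI_ge I ge) (pI_ge (compset I J) ge).
Qed.

Lemma count_lt_mono (p : nat -> bool) i j :
  i < j -> p i -> count p (iota 0 i) < count p (iota 0 j).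
Proof.
move=> ij pi; rewrite -(subnKC (ltnW ij)) count_iotaD.
have : 0 < j - i by rewrite subn_gt0.
case: (j - i) => // k _ /=; rewrite addn0 pi.
by rewrite -addn1 leq_add2l leq_addr.
Qed.

Lemma rank_lt n (I : {set 'I_n}) (i : 'I_n) : i \in I -> rank I i < #|I|.
Proof.
move=> iI; rewrite -count_pI; apply: count_lt_mono => //.
by rewrite pI_ord.
Qed.

Lemma rank_inj n (I : {set 'I_n}) (i1 i2 : 'I_n) :
  i1 \in I -> i2 \in I -> rank I i1 = rank I i2 -> i1 = i2.
Proof.
move=> i1I i2I; case: (ltngtP i1 i2) => [lt|lt|/val_inj //].
  have p1 : pI I i1 by rewrite pI_ord.
  by move=> e; move: (count_lt_mono lt p1); rewrite -/(rank I i1) -/(rank I i2) e ltnn.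
have p2 : pI I i2 by rewrite pI_ord.
by move=> e; move: (count_lt_mono lt p2); rewrite -/(rank I i1) -/(rank I i2) e ltnn.
Qed.

Lemma rank_surj n (I : {set 'I_n}) j :
  j < #|I| -> exists2 i : 'I_n, i \in I & rank I i = j.
Proof.
move=> jI.
have := @uniq_min_size _ [seq rank I (nat_of_ord i) | i <- enum I] (iota 0 #|I|).
case.
- rewrite map_inj_in_uniq ?enum_uniq // => x y; rewrite !mem_enum.
  exact: rank_inj.
- by move=> x /mapP[i]; rewrite mem_enum mem_iota add0n => iI ->; apply: rank_lt.
- by rewrite size_map size_iota -cardE.
move=> _ /(_ j); rewrite mem_iota add0n jI /= => /mapP[i]; rewrite mem_enum => iI ->.
by exists i.
Qed.

Lemma compset_sub n (I : {set 'I_n}) d (J : {set 'I_d}) : compset I J \subset I.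
Proof. by apply/fintype.subsetP => i; rewrite inE => /andP[]. Qed.

Lemma compset_inj n (I : {set 'I_n}) d (J1 J2 : {set 'I_d}) :
  d = #|I| -> compset I J1 = compset I J2 -> J1 = J2.
Proof.
move=> dI E; apply/setP => j.
have jI : j < #|I| by rewrite -dI ltn_ord.
have [i iI ri] := rank_surj jI.
have := congr1 (fun X : {set 'I_n} => i \in X) E; rewrite !inE iI /= ri.
by rewrite !pI_ord.
Qed.

Definition pre n (I I' : {set 'I_n}) d : {set 'I_d} :=
  [set j : 'I_d | [exists i in I', rank I i == j]].

Lemma compset_pre n (I I' : {set 'I_n}) d :
  d = #|I| -> I' \subset I -> compset I (pre I I' d) = I'.
Proof.
move=> dI sub; apply/setP => i; rewrite inE.
case iI': (i \in I').
  have iI : i \in I by apply: (fintype.subsetP sub).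
  have lt : rank I i < d by rewrite dI rank_lt.
  rewrite iI /= -[rank I i]/(nat_of_ord (Ordinal lt)) pI_ord inE.
  by apply/existsP; exists i; rewrite iI' eqxx.
apply/negbTE/negP => /andP[iI /existsP[j /andP[]]].
rewrite inE => /existsP[i' /andP[i'I' /eqP ri']] /eqP rj.
have i'I : i' \in I by apply: (fintype.subsetP sub).
have ei : i' = i by apply: (rank_inj i'I iI); rewrite ri' rj.
by move: iI'; rewrite -ei i'I'.
Qed.

Lemma pbinom_contrP S (I : {set 'I_(degP S)}) T :
  pbinom (contrP I) T = #|[set I' : {set 'I_(degP S)} | (I' \subset I) && (contrP I' == T)]|.
Proof.
rewrite /pbinom; have dI := degP_contrP I.
transitivity #|[set J : {set 'I_(degP (contrP I))} | contrP (compset I J) == T]|.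
  by apply: eq_card => J; rewrite !inE contrP_comp.
rewrite -(card_in_imset (f := @compset _ I (degP (contrP I)))); last first.
  by move=> J1 J2 _ _; apply: compset_inj.
apply: eq_card => I'; rewrite inE; apply/imsetP/andP.
  by case=> J; rewrite inE => /eqP e ->; split; [apply: compset_sub | rewrite e].
case=> sub /eqP e; exists (pre I I' (degP (contrP I))); last by rewrite compset_pre.
by rewrite inE compset_pre // e.
Qed.

Lemma sum_pred1_seq (R : nmodType) (T : eqType) (r : seq T) x (F : T -> R) :
  uniq r -> (\sum_(U <- r) (if x == U then F U else 0) = if x \in r then F x else 0)%R.
Proof.
elim: r => [|y r IH] /=; first by rewrite big_nil.
case/andP => yr ur; rewrite big_cons IH // in_cons.
case: (eqVneq x y) => [->|_] /=; last by rewrite add0r.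
by rewrite (negbTE yr) addr0.
Qed.

Lemma mulrn_pbinom (R : nmodType) S U (x : R) :
  (x *+ pbinom S U = \sum_(I : {set 'I_(degP S)}) (if contrP I == U then x else 0))%R.
Proof.
rewrite /pbinom -sumr_const big_mkcond; apply: eq_bigr => I _; rewrite inE.
by [].
Qed.

Lemma fsum_regroup (R : nmodType) S (A : set PT) (H : PT -> R) :
  (\sum_(U \in A) (H U *+ pbinom S U) =
   \sum_(I : {set 'I_(degP S)} | contrP I \in A) H (contrP I))%R.
Proof.
set r := undup [seq contrP X | X <- enum {set 'I_(degP S)}].
have rin (I : {set 'I_(degP S)}) : contrP I \in r.
  by rewrite mem_undup; apply/mapP; exists I; rewrite ?mem_enum.
rewrite (fsbigE [seq U <- r | U \in A]); first last.
- move=> U AU; rewrite mem_filter mem_undup (mem_set AU) /= => Un.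
  suff -> : pbinom S U = 0%N by rewrite mulr0n.
  apply/eqP; rewrite cards_eq0; apply/eqP/setP => I; rewrite !inE.
  apply/negbTE/eqP => e; move/mapP: Un; apply; exists I; rewrite ?mem_enum //.
- by move=> U /=; rewrite mem_filter => /andP[/set_mem].
- by rewrite filter_uniq // undup_uniq.
rewrite big_filter_cond.
under eq_bigl do rewrite andbb.
rewrite big_mkcond.
under eq_bigr do rewrite mulrn_pbinom -big_mkcondl.
transitivity (\sum_(U <- r) \sum_(I : {set 'I_(degP S)})
   (if contrP I == U then (if U \in A then H U else 0) else 0))%R.
  apply: eq_bigr => U _; case: (U \in A).
    by rewrite big_mkcond; apply: eq_bigr => I _; rewrite andbT.
  by rewrite big1 // => I _; case: ifP.
rewrite exchange_big /= [RHS]big_mkcond; apply: eq_bigr => I _.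
by rewrite sum_pred1_seq ?undup_uniq // rin.
Qed.

Lemma card_supsets n (I' : {set 'I_n}) k :
  #|[set I : {set 'I_n} | (I' \subset I) && (#|I| == #|I'| + k)]| = 'C(n - #|I'|, k).
Proof.
rewrite -(card_in_imset (f := fun I => I :\: I')); last first.
  move=> I1 I2; rewrite !inE => /andP[s1 _] /andP[s2 _] e.
  apply/setP => x; have := congr1 (fun X : {set 'I_n} => x \in X) e; rewrite !inE.
  case xI': (x \in I') => //=.
  by rewrite (fintype.subsetP s1 _ xI') (fintype.subsetP s2 _ xI').
have -> : n - #|I'| = #|~: I'| by rewrite [#|~: I'|]cardsCs finset.setCK card_ord.
rewrite -cards_draws; apply: eq_card => D; rewrite inE.
apply/imsetP/andP.
  case=> I; rewrite inE => /andP[sI /eqP cI] ->; split.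
    by rewrite finset.setDE finset.subsetIr.
  by rewrite cardsD (finset.setIidPr sI) cI addKn.
case=> sD /eqP cD.
have dis : [disjoint D & I'] by rewrite finset.disjoints_subset.
exists (D :|: I').
  by rewrite inE finset.subsetUr cardsU (finset.disjoint_setI0 dis) cards0 subn0 cD addnC eqxx.
by rewrite finset.setDUl finset.setDv finset.setU0 (finset.setDidPl dis).
Qed.

Lemma sum_supsets (R : nmodType) n (I' : {set 'I_n}) (F : nat -> R) :
  (\sum_(I : {set 'I_n} | I' \subset I) F #|I| =
   \sum_(k < (n - #|I'|).+1) F (#|I'| + k) *+ 'C(n - #|I'|, k))%R.
Proof.
rewrite (partition_big (fun I : {set 'I_n} => (inord (#|I| - #|I'|) : 'I_(n - #|I'|).+1)) xpredT) //.
apply: eq_bigr => k _; rewrite -card_supsets -sumr_const.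
have eqP1 : forall I : {set 'I_n}, ((I' \subset I) && (inord (#|I| - #|I'|) == k)) =
    (I \in [set I : {set 'I_n} | (I' \subset I) && (#|I| == #|I'| + k)]).
  move=> I; rewrite inE; case sI: (I' \subset I) => //=.
  have le1 : #|I'| <= #|I| by apply: subset_leq_card.
  have le2 : #|I| <= n by rewrite -[n in _ <= n]card_ord max_card.
  rewrite -val_eqE /= inordK; last by rewrite ltnS leq_sub2r.
  by apply/eqP/eqP => [<-|->]; [rewrite subnKC | rewrite addKn].
apply: eq_big => // I; rewrite eqP1 inE => /andP[_ /eqP ->].
by [].
Qed.

Unset Implicit Arguments.
Local Open Scope classical_set_scope.
Local Open Scope ring_scope.

Lemma mulrn_nat (x n : nat) : x *+ n = (x * n)%N.
Proof. by elim: n => [|n IH]; rewrite ?muln0 // mulrS IH mulnS. Qed.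

Theorem mainTheorem3 (C : numClosedFieldType) (S T : PT) :
  inP S -> inP T ->
  (forall k : nat, (degP T + k <= degP S)%N ->
     \sum_(U \in [set U : PT | inP U /\ degP U = (degP T + k)%N])
        (pbinom S U * pbinom U T)%N
     = (pbinom S T * 'C(degP S - degP T, k))%N) /\
  (forall a b : C,
     \sum_(U \in [set U : PT | inP U])
        ((pbinom S U * pbinom U T)%:R * a ^+ (degP S - degP U) * (b - a) ^+ (degP U - degP T))
     = (pbinom S T)%:R * b ^+ (degP S - degP T)).
Proof.
move=> _ _; split.
  move=> k _.
  rewrite (eq_fsbigr (fun U => pbinom U T *+ pbinom S U)); last first.
    by move=> U _; rewrite mulrn_nat mulnC.
  rewrite fsum_regroup.
  rewrite (eq_bigl (fun I : {set 'I_(degP S)} => #|I| == (degP T + k)%N)); last first.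
    move=> I; apply/idP/idP => [/set_mem [_]|/eqP h].
      by rewrite degP_contrP => ->.
    by apply/mem_set; split; [exact: inP_contrP | rewrite degP_contrP].
  have cnt : forall n (X : {set {set 'I_n}}), #|X| = \sum_(I' in X) (1 : nat).
    by move=> n X; rewrite sumr_const mulrn_nat mul1n.
  under eq_bigr do rewrite pbinom_contrP cnt.
  rewrite (exchange_big_dep (fun I' => contrP I' == T)) /=; last first.
    by move=> I I' _; rewrite inE => /andP[].
  transitivity (\sum_(I' : {set 'I_(degP S)} | contrP I' == T) 'C(degP S - degP T, k)).
    apply: eq_bigr => I' /eqP e.
    have cI' : #|I'| = degP T by rewrite -e degP_contrP.
    rewrite -cI' -card_supsets cnt; apply: eq_bigl => I.
    by rewrite !inE e eqxx andbT andbC.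
  rewrite sumr_const mulrn_nat mulnC; congr (_ * _)%N.
  by rewrite /pbinom; apply: eq_card => I; rewrite !inE.
move=> a b.
rewrite (eq_fsbigr (fun U => ((pbinom U T)%:R * a ^+ (degP S - degP U) * (b - a) ^+ (degP U - degP T)) *+ pbinom S U)); last first.
  by move=> U _; rewrite natrM -!mulrA mulr_natl.
rewrite fsum_regroup.
rewrite (eq_bigl (fun _ => true)); last first.
  by move=> I; apply/mem_set; exact: inP_contrP.
under eq_bigr do rewrite degP_contrP pbinom_contrP -mulrA mulr_natl -sumr_const.
rewrite (exchange_big_dep (fun I' => contrP I' == T)) /=; last first.
  by move=> I I' _; rewrite inE => /andP[].
transitivity (\sum_(I' : {set 'I_(degP S)} | contrP I' == T) b ^+ (degP S - degP T)).
  apply: eq_bigr => I' /eqP e.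
  have cI' : #|I'| = degP T by rewrite -e degP_contrP.
  rewrite (eq_bigl (fun I : {set 'I_(degP S)} => I' \subset I)); last first.
    by move=> I; rewrite !inE e eqxx andbT.
  rewrite (@sum_supsets _ _ I' (fun j => a ^+ (degP S - j) * (b - a) ^+ (j - degP T))) cI'.
  have hb : b ^+ (degP S - degP T) = (a + (b - a)) ^+ (degP S - degP T).
    by rewrite addrC subrK.
  rewrite hb exprDn; apply: eq_bigr => i _; rewrite subnDA addKn.
  by [].
rewrite sumr_const mulr_natl; congr (_ *+ _).
by rewrite /pbinom; apply: eq_card => I; rewrite !inE.
Qed.
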